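(* Let $\mathbb{P}(1:3:5)=\mathrm{Proj}\,\mathbb{C}[\mathfrak{A},\mathfrak{B},\mathfrak{C}]$ (weights $1,3,5$) and $\mathbb{P}(2:3:5:6)=\mathrm{Proj}\,\mathbb{C}[\alpha,\beta,\gamma,\delta]$ (weights $2,3,5,6$). A point $(\alpha:\beta:\gamma:\delta)\in\mathbb{P}(2:3:5:6)$ satisfies the modular equation $$(-\alpha^3-\beta^2+\delta)^2-4\alpha(\alpha\beta-\gamma)^2=0$$ if and only if it lies in the image of the embedding $\Psi_5:\mathbb{P}(1:3:5)\to\mathbb{P}(2:3:5:6)$ given by $$(\mathfrak{A}:\mathfrak{B}:\mathfrak{C})\mapsto\Big(\tfrac{25}{36}\mathfrak{A}^2:\ \tfrac12\big(-\tfrac{125}{108}\mathfrak{A}^3+\tfrac54\mathfrak{B}\big):\ \tfrac1{32}\mathfrak{C}:\ \tfrac{25}{64}\mathfrak{B}^2-\tfrac5{96}\mathfrak{A}\mathfrak{C}\Big).$$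
   Context: Here $\mathfrak{A},\mathfrak{B},\mathfrak{C}$ are coordinates (coming from Klein's icosahedral invariants) on the weighted projective plane $\mathbb{P}(1:3:5)$, which is the compactification (by one cusp $(1:0:0)$) of the symmetric Hilbert modular surface for $\mathbb{Q}(\sqrt5)$. The point $(\alpha:\beta:\gamma:\delta)$ parametrizes the elliptic K3 surface $y^2=x^3+(-3\alpha t^4-\gamma t^5)x+(t^5-2\beta t^6+\delta t^7)$; the given modular equation is the condition for this surface to admit an extra section making its Néron–Severi lattice $E_8(-1)\oplus E_8(-1)\oplus\begin{pmatrix}2&1\\1&-2\end{pmatrix}$. *)

(* Defs.v *)
(* The complex numbers are modelled as R[i] = complex R for
   an arbitrary R : realType (any realType is the real field). *)
From HB Require Import structures.
From mathcomp Require Import all_boot all_order all_algebra.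
From mathcomp Require Import complex.
From mathcomp Require Import reals.
Set Implicit Arguments. Unset Strict Implicit. Unset Printing Implicit Defensive.
Import Order.TTheory GRing.Theory Num.Theory.
Local Open Scope ring_scope.

Section Defs.
Variable R : realType.
Local Notation C := (R[i]).

(* A representative (a,b,c,d) in C^4 \ {0} of a point of P(2:3:5:6). *)
Definition nonzero4 (a b c d : C) : Prop :=
  ~ (a = 0 /\ b = 0 /\ c = 0 /\ d = 0).

(* A representative (A,B,C) in C^3 \ {0} of a point of P(1:3:5). *)
Definition nonzero3 (A B C' : C) : Prop :=
  ~ (A = 0 /\ B = 0 /\ C' = 0).

Definition wequiv2356 (a b c d a' b' c' d' : C) : Prop :=
  exists2 l : C, l != 0 &
    [/\ a' = l ^+ 2 * a, b' = l ^+ 3 * b, c' = l ^+ 5 * c & d' = l ^+ 6 * d].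

Definition modular_eq (a b c d : C) : C :=
  (- a ^+ 3 - b ^+ 2 + d) ^+ 2 - 4%:R * a * (a * b - c) ^+ 2.

Definition Psi5_1 (A B C' : C) : C := (25%:R / 36%:R) * A ^+ 2.
Definition Psi5_2 (A B C' : C) : C :=
  (1 / 2%:R) * (- (125%:R / 108%:R) * A ^+ 3 + (5%:R / 4%:R) * B).
Definition Psi5_3 (A B C' : C) : C := (1 / 32%:R) * C'.
Definition Psi5_4 (A B C' : C) : C :=
  (25%:R / 64%:R) * B ^+ 2 - (5%:R / 96%:R) * A * C'.

Definition in_image_Psi5 (a b c d : C) : Prop :=
  exists A B C' : C, nonzero3 A B C' /\
    wequiv2356 (Psi5_1 A B C') (Psi5_2 A B C') (Psi5_3 A B C') (Psi5_4 A B C')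
               a b c d.
End Defs.

(* Main.v *)
Require Import Defs.
From HB Require Import structures.
From mathcomp Require Import all_boot all_order all_algebra.
From mathcomp Require Import complex.
From mathcomp Require Import reals.
From mathcomp Require Import ring.
Import Order.TTheory GRing.Theory Num.Theory.
Local Open Scope ring_scope.

Lemma key (R : realType) (A B C : R[i]) :
  let a := Psi5_1 A B C in let b := Psi5_2 A B C in let c:= Psi5_3 A B C in let d := Psi5_4 A B C in
  (- a ^+ 3 - b ^+ 2 + d) = 2%:R * (5%:R/6%:R * A) * (a*b - c).
Proof. rewrite /Psi5_1 /Psi5_2 /Psi5_3 /Psi5_4 /=. field.
all: by rewrite ?pnatr_eq0.
Qed.

Theorem mainTheorem1 (R : realType) (a b c d : R[i]) :
  nonzero4 a b c d ->
  (modular_eq a b c d = 0 <-> in_image_Psi5 a b c d).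
Proof.
move=> nz; split.
- move=> H.
  set u := - a ^+ 3 - b ^+ 2 + d.
  set v := a * b - c.
  have Hs := sqrtCK a.
  set s := sqrtC a in Hs.
  have Hu : (u - 2%:R * s * v) * (u + 2%:R * s * v) = 0.
    by rewrite -H /modular_eq -/u -/v -Hs; ring.
  have [t [Ht Hut]] : exists t, t ^+ 2 = a /\ u = 2%:R * t * v.
    move/eqP: Hu; rewrite mulf_eq0 => /orP [] /eqP E.
    + exists s; split => //; by rewrite -[u](subrK (2%:R * s * v)) E add0r.
    + exists (- s); split; first by rewrite sqrrN.
      by rewrite -[u](addrK (2%:R * s * v)) E sub0r; ring.
  pose A := 6%:R / 5%:R * t.
  pose B := 4%:R / 5%:R * (2%:R * b + 125%:R / 108%:R * A ^+ 3).
  pose C' := 32%:R * c.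
  have e1 : a = Psi5_1 A B C'.
    by rewrite /Psi5_1 /A -Ht; field; rewrite ?pnatr_eq0 //=.
  have e2 : b = Psi5_2 A B C'.
    by rewrite /Psi5_2 /B; field; rewrite ?pnatr_eq0 //=.
  have e3 : c = Psi5_3 A B C'.
    by rewrite /Psi5_3 /C'; field; rewrite ?pnatr_eq0 //=.
  have tA : t = 5%:R / 6%:R * A.
    by rewrite /A; field; rewrite ?pnatr_eq0 //=.
  have e4 : d = Psi5_4 A B C'.
    have -> : d = u + a ^+ 3 + b ^+ 2 by rewrite /u; ring.
    rewrite Hut /v tA e1 e2 e3 /Psi5_1 /Psi5_2 /Psi5_3 /Psi5_4.
    by field; rewrite ?pnatr_eq0.
  exists A, B, C'; split.
    move=> [A0 [B0 C0]]; apply: nz.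
    by rewrite e1 e2 e3 e4 A0 B0 C0 /Psi5_1 /Psi5_2 /Psi5_3 /Psi5_4; 
      repeat split; ring.
  exists 1; first exact: oner_neq0.
  by split; rewrite expr1n mul1r.
- move=> [A [B [C' [_ [l _ [-> -> -> ->]]]]]].
  have K := @key _ A B C'; move: K => /=.
  rewrite /modular_eq.
  set p1 := Psi5_1 A B C'; set p2 := Psi5_2 A B C'; set p3 := Psi5_3 A B C'; set p4 := Psi5_4 A B C'.
  move=> K.
  have E : (- (l ^+ 2 * p1) ^+ 3 - (l ^+ 3 * p2) ^+ 2 + l ^+ 6 * p4) ^+ 2 -
    4%:R * (l ^+ 2 * p1) * (l ^+ 2 * p1 * (l ^+ 3 * p2) - l ^+ 5 * p3) ^+ 2
    = l ^+ 12 * ((- p1 ^+ 3 - p2 ^+ 2 + p4) ^+ 2 - 4%:R * p1 * (p1 * p2 - p3) ^+ 2)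
    by ring.
  rewrite E K /p1 /Psi5_1; field.
by [].
Qed.
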